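(* Let $\mathscr{I}_1\subseteq(0,1)$ and $\mathscr{I}_2\subseteq\mathbb{R}$, and let $f_\nu^\alpha:\mathbb{R}\to\mathbb{R}$ ($\nu\in\mathscr{I}_1$, $\alpha\in\mathscr{I}_2$) be even continuous functions and $\vartheta_\nu^\alpha\in[0,\infty)$ be numbers such that for some $C>0$, $\|f_\nu^\alpha\|_{L^\infty}\le C$ and $\vartheta_\nu^\alpha\le C\nu^2$ for all $\nu,\alpha$. Fix $q_*>0$. (i) Define \[ F_\nu^\alpha(X):=\int_{X+\vartheta_\nu^\alpha\tanh(q_*X)}^{X+\nu+\vartheta_\nu^\alpha\tanh(q_*X+q_*\nu)}f_\nu^\alpha(s)\,ds-\int_{X+\vartheta_\nu^\alpha\tanh(q_*X)}^{X+\nu+\vartheta_\nu^\alpha\tanh(q_*X)}f_\nu^\alpha(s)\,ds . \] Then $\sup_{\nu\in\mathscr{I}_1,\alpha\in\mathscr{I}_2,X\in\mathbb{R}}\nu^{-3}e^{2q_*|X|}|F_\nu^\alpha(X)|<\infty$. (ii) Suppose $0<q<q_*$ and $\sup_{\nu\in\mathscr{I}_1,\alpha\in\mathscr{I}_2,X\in\mathbb{R}}e^{q|X|}|f_\nu^\alpha(X)|<\infty$. Then there exist $L_\nu^{\alpha,\int}\in\mathbb{R}$ such that \[ \sup_{\nu\in\mathscr{I}_1,\alpha\in\mathscr{I}_2}\left[\left(\sup_{X\in\mathbb{R}}e^{q|X|}\left|\int_0^Xf_\nu^\alpha(s)\,ds-L_\nu^{\alpha,\int}\tanh\left(\frac{q_*X}{2}\right)\right|\right)+|L_\nu^{\alpha,\int}|\right]<\infty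 . \] *)

(* Defs.v *)
(* concrete reals R, Coquelicot's RInt for integrals.
   The functions f are continuous, so the (Riemann) integral RInt is the
   ordinary integral of the paper. *)
From Stdlib Require Import Reals Lra.
From Coquelicot Require Import Coquelicot.
Open Scope R_scope.

Definition F_B3 (g : R -> R) (theta qs nu X : R) : R :=
  RInt g (X + theta * tanh (qs * X)) (X + nu + theta * tanh (qs * X + qs * nu))
  - RInt g (X + theta * tanh (qs * X)) (X + nu + theta * tanh (qs * X)).

(* Main.v *)
Require Import Defs.
From Stdlib Require Import Reals Lra.
From Coquelicot Require Import Coquelicot.
Open Scope R_scope.

Section Tail.
Variables (g : R -> R) (K q : R).
Hypothesis Hq : 0 < q.
Hypothesis Hc : forall s, continuous g s.
Hypothesis Hb : forall s, 0 <= s -> Rabs (g s) <= K * exp (- q * s).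

Lemma exg a b : ex_RInt g a b.
Proof. apply (@ex_RInt_continuous R_CompleteNormedModule); auto. Qed.

Lemma K_pos : 0 <= K.
Proof. assert (H := Hb 0 (Rle_refl 0)). replace (-q*0) with 0 in H by ring.
  rewrite exp_0 in H. assert (0 <= Rabs (g 0)) by apply Rabs_pos. lra. Qed.

Lemma tail X Y : 0 <= X <= Y -> Rabs (RInt g X Y) <= K/q*exp(-q*X).
Proof.
  intros HXY.
  assert (HI : is_RInt (fun t => K * exp (-q*t)) X Y
     (minus (-K/q*exp(-q*Y)) (-K/q*exp(-q*X)))).
  { apply (is_RInt_derive (fun t => -K/q*exp(-q*t))).
    - intros x _. auto_derive; auto. field. lra.
    - intros x _. apply (ex_derive_continuous (fun t => K * exp (-q*t))). auto_derive. auto. }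
  assert (Hex2 : ex_RInt (fun t => K * exp (-q*t)) X Y) by (eexists; exact HI).
  eapply Rle_trans. apply abs_RInt_le; [lra| apply exg].
  eapply Rle_trans. apply RInt_le; [lra| | exact Hex2 |].
  - apply (@ex_RInt_continuous R_CompleteNormedModule). intros; apply continuous_Rabs_comp; auto.
  - intros x Hx. apply Hb. lra.
  - rewrite (is_RInt_unique _ _ _ _ HI). unfold minus, plus, opp; simpl.
    assert (0 < exp (-q*Y)) by apply exp_pos.
    assert (0 <= K/q) by (apply Rmult_le_pos; [apply K_pos| left; apply Rinv_0_lt_compat; lra]).
    assert (0 <= K/q*exp(-q*Y)) by (apply Rmult_le_pos; lra).
    replace (-K/q*exp(-q*Y) + - (-K/q*exp(-q*X))) with (K/q*exp(-q*X) - K/q*exp(-q*Y)) by (field; lra).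
    lra.
Qed.

Lemma diff0 a b : 0 <= a <= b -> Rabs (RInt g 0 b - RInt g 0 a) <= K/q*exp(-q*a).
Proof.
  intros H. assert (E : RInt g 0 a + RInt g a b = RInt g 0 b) by (apply (RInt_Chasles g 0 a b); apply exg).
  rewrite <- E.
  assert (E2 : forall A B : R, A + B - A = B) by (intros; ring). rewrite E2.
  apply tail; auto.
Qed.

Lemma small eps : 0 < eps -> exists N, K/q*exp(-q*INR N) < eps.
Proof.
  intros He. assert (HK := K_pos).
  destruct (nfloor_ex (K/(q*q*eps))) as [N HN].
  { apply Rmult_le_pos; auto. left; apply Rinv_0_lt_compat.
    apply Rmult_lt_0_compat; [nra|lra]. }
  exists (S N). rewrite S_INR.
  set (M := INR N + 1) in *.
  assert (HM : K < q*q*eps*M).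
  { destruct HN as [_ HN]. apply (Rmult_lt_compat_l (q*q*eps)) in HN; [|apply Rmult_lt_0_compat; [nra|lra]].
    replace (q*q*eps*(K/(q*q*eps))) with K in HN by (field; split; lra). lra. }
  assert (H1 := exp_ineq1_le (q*M)).
  assert (Hp := exp_pos (q*M)).
  replace (-q*M) with (-(q*M)) by ring. rewrite exp_Ropp.
  assert (0 <= M) by (assert (0 <= INR N) by apply pos_INR; unfold M; lra).
  assert (Heq : 0 < eps*q) by nra.
  assert (eps*q*(1+q*M) <= eps * q * exp (q*M)) by (apply Rmult_le_compat_l; lra).
  assert (K < eps * q * exp (q*M)) by nra.
  apply (Rmult_lt_reg_r (q * exp (q*M))). apply Rmult_lt_0_compat; lra.
  replace (K / q * / exp (q * M) * (q * exp (q * M))) with K by (field; lra). lra.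
Qed.

Definition Lg := real (Lim_seq (fun n => RInt g 0 (INR n))).

Lemma Lg_bound X : 0 <= X -> Rabs (RInt g 0 X - Lg) <= K/q*exp(-q*X).
Proof.
  intros HX.
  set (u := fun n => RInt g 0 (INR n)).
  assert (Hcau : ex_lim_seq_cauchy u).
  { intros eps. destruct (small eps (cond_pos eps)) as [N HN]. exists N.
    assert (Hm : forall n m, (N <= n)%nat -> (n <= m)%nat -> Rabs (u m - u n) < eps).
    { intros n m Hn Hnm. unfold u. eapply Rle_lt_trans. apply diff0.
      split; [apply pos_INR| apply le_INR; auto].
      eapply Rle_lt_trans; [|exact HN].
      apply Rmult_le_compat_l. apply Rmult_le_pos; [apply K_pos| left; apply Rinv_0_lt_compat; lra].
      assert (INR N <= INR n) by (apply le_INR; auto).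
      destruct (Req_dec (INR N) (INR n)) as [E|E]. rewrite E; lra.
      left; apply exp_increasing; nra. }
    intros n m Hn Hm'. destruct (Nat.le_ge_cases n m).
    - rewrite Rabs_minus_sym; auto.
    - apply Hm; auto. }
  apply ex_lim_seq_cauchy_corr in Hcau. destruct Hcau as [l Hl].
  assert (HL : Lg = l). { unfold Lg. fold u. rewrite (is_lim_seq_unique _ _ Hl). reflexivity. }
  rewrite HL.
  assert (Hw : is_lim_seq (fun n => Rabs (RInt g 0 X - u n)) (Rabs (RInt g 0 X - l))).
  { apply (is_lim_seq_abs _ (Finite (RInt g 0 X - l))).
    apply is_lim_seq_minus'; auto. apply is_lim_seq_const. }
  assert (Hev : eventually (fun n => Rabs (RInt g 0 X - u n) <= K/q*exp(-q*X))).
  2:{ assert (H := is_lim_seq_le_loc _ _ _ _ Hev Hw (is_lim_seq_const (K/q*exp(-q*X)))).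
      simpl in H. exact H. }
  destruct (nfloor_ex X HX) as [N HN]. exists (S N). intros n Hn.
  apply le_INR in Hn. rewrite S_INR in Hn.
  rewrite Rabs_minus_sym. unfold u. apply diff0. lra.
Qed.
End Tail.

Lemma tanh_alt z : tanh z = 1 - 2 / (exp (2*z) + 1).
Proof.
  unfold tanh, sinh, cosh.
  replace (2*z) with (z+z) by ring. rewrite exp_plus, exp_Ropp.
  assert (H := exp_pos z).
  field. split; [|lra]. nra.
Qed.

Lemma tanh_diff y h : 0 <= h ->
  0 <= tanh (y+h) - tanh y <= 2*(exp(2*h)-1)*exp(-2*Rabs y).
Proof.
  intro Hh. rewrite !tanh_alt.
  replace (2*(y+h)) with (2*y+2*h) by ring. rewrite exp_plus.
  set (E := exp (2*y)). set (D := exp (2*h)).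
  assert (HE : 0 < E) by apply exp_pos.
  assert (HD : 1 <= D).
  { unfold D. rewrite <- exp_0. destruct (Req_dec h 0) as [->|]. right; f_equal; ring.
    left; apply exp_increasing; lra. }
  assert (Heq : 1 - 2 / (E * D + 1) - (1 - 2 / (E + 1)) = 2*E*(D-1) / ((E+1)*(E*D+1))).
  { field. split; nra. }
  rewrite Heq.
  assert (HP : 0 < (E+1)*(E*D+1)) by nra.
  split.
  { apply Rmult_le_pos; [nra| left; apply Rinv_0_lt_compat; lra]. }
  destruct (Rle_or_lt 0 y) as [Hy|Hy].
  - rewrite Rabs_right by lra.
    replace (-2*y) with (-(2*y)) by ring. rewrite exp_Ropp. fold E.
    apply Rle_trans with (2*E*(D-1) / (E*E)).
    + unfold Rdiv. apply Rmult_le_compat_l; [nra|].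
      apply Rinv_le_contravar; nra.
    + right. field. lra.
  - rewrite Rabs_left by lra.
    replace (-2*-y) with (2*y) by ring. fold E.
    apply Rle_trans with (2*E*(D-1) / 1).
    + unfold Rdiv. apply Rmult_le_compat_l; [nra|].
      apply Rinv_le_contravar; nra.
    + right. field.
Qed.

Lemma expm1_le h : 0 <= h -> exp (2*h) - 1 <= 2*h*exp(2*h).
Proof.
  intro Hh. assert (H1 := exp_ineq1_le (-(2*h))). rewrite exp_Ropp in H1.
  assert (H2 := exp_pos (2*h)).
  assert (H3 : (1 - 2*h) * exp (2*h) <= 1).
  { apply Rle_trans with (/ exp (2*h) * exp (2*h)).
    apply Rmult_le_compat_r; lra. right; field; lra. }
  nra.
Qed.

Lemma one_m_tanh y : 0 <= y -> 0 <= 1 - tanh y <= 2*exp(-(2*y)).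
Proof.
  intros Hy. rewrite tanh_alt, exp_Ropp.
  assert (HE := exp_pos (2*y)).
  replace (1 - (1 - 2 / (exp (2 * y) + 1))) with (2 / (exp (2 * y) + 1)) by ring.
  split. apply Rmult_le_pos; [lra| left; apply Rinv_0_lt_compat; lra].
  unfold Rdiv. apply Rmult_le_compat_l; [lra|]. apply Rinv_le_contravar; lra.
Qed.

Lemma tanh_opp y : tanh (-y) = - tanh y.
Proof. unfold tanh, sinh, cosh. rewrite Ropp_involutive.
  assert (0 < exp y) by apply exp_pos. assert (0 < exp (-y)) by apply exp_pos.
  field. lra. Qed.

Lemma RInt_odd g (Hc : forall s, continuous g s) (He : forall s, g (-s) = g s) X :
  RInt g 0 (-X) = - RInt g 0 X.
Proof.
  assert (H := RInt_comp_lin g (-1) 0 0 X (exg g Hc _ _)).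
  replace (-1*0+0) with 0 in H by ring. replace (-1*X+0) with (-X) in H by ring.
  rewrite <- H.
  rewrite (RInt_ext _ (fun y => opp (g y))).
  - rewrite RInt_opp by apply exg, Hc. reflexivity.
  - intros x _. unfold scal, opp; simpl. unfold mult; simpl.
    replace (-1*x+0) with (-x) by ring. rewrite He. ring.
Qed.

Lemma pos_case g K q qs (Hq : 0 < q) (Hqs : q <= qs) (Hc : forall s, continuous g s)
  (Hb : forall s, 0 <= s -> Rabs (g s) <= K * exp (- q * s)) X : 0 <= X ->
  exp(q*X)*Rabs(RInt g 0 X - Lg g * tanh(qs*X/2)) <= 3*(K/q).
Proof.
  intros HX.
  assert (HL := Lg_bound g K q Hq Hc Hb X HX).
  assert (HL0 := Lg_bound g K q Hq Hc Hb 0 (Rle_refl 0)).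
  rewrite RInt_point in HL0. unfold zero in HL0; simpl in HL0.
  replace (-q*0) with 0 in HL0 by ring. rewrite exp_0, Rmult_1_r in HL0.
  replace (0 - Lg g) with (- Lg g) in HL0 by ring. rewrite Rabs_Ropp in HL0.
  destruct (one_m_tanh (qs*X/2)) as [T1 T2]. nra.
  replace (-(2*(qs*X/2))) with (-qs*X) in T2 by field.
  set (t := tanh (qs*X/2)) in *. set (A := RInt g 0 X) in *.
  replace (A - Lg g * t) with ((A - Lg g) + Lg g * (1 - t)) by ring.
  assert (Hr : Rabs ((A - Lg g) + Lg g * (1 - t)) <= K/q*exp(-q*X) + K/q * (2*exp(-qs*X))).
  { eapply Rle_trans. apply Rabs_triang. apply Rplus_le_compat; auto.
    rewrite Rabs_mult, (Rabs_right (1-t)) by lra.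
    apply Rmult_le_compat; auto using Rabs_pos. }
  assert (He : 0 < exp (q*X)) by apply exp_pos.
  eapply Rle_trans. apply Rmult_le_compat_l. lra. exact Hr.
  assert (E1 : exp (q*X) * exp(-q*X) = 1).
  { rewrite <- exp_plus. replace (q*X + -q*X) with 0 by ring. apply exp_0. }
  assert (E2 : exp (q*X) * exp(-qs*X) <= 1).
  { rewrite <- exp_plus, <- exp_0. destruct (Req_dec (q*X + -qs*X) 0) as [E|E].
    rewrite E; lra. left; apply exp_increasing. nra. }
  assert (HKq : 0 <= K/q) by (apply Rmult_le_pos; [apply (K_pos g K q Hb)| left; apply Rinv_0_lt_compat; lra]).
  replace (exp (q * X) * (K / q * exp (- q * X) + K / q * (2 * exp (- qs * X))))
    with (K/q * (exp (q*X) * exp(-q*X)) + 2 * (K/q) * (exp (q * X) * exp (- qs * X))) by ring.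
  rewrite E1. nra.
Qed.
Lemma part_i (g : R->R) C th qs nu X : 0<C -> (forall s, continuous g s) ->
  (forall s, Rabs (g s) <= C) -> 0 <= th <= C*nu^2 -> 0<nu<1 -> 0<qs ->
  / nu^3 * exp(2*qs*Rabs X) * Rabs (F_B3 g th qs nu X) <= C*C*(4*qs*exp(2*qs)).
Proof.
  intros HC Hc Hb Hth Hnu Hqs.
  assert (Hex : forall a b, ex_RInt g a b) by (intros; apply (@ex_RInt_continuous R_CompleteNormedModule); auto).
  unfold F_B3.
  set (b1 := X + th * tanh (qs * X)).
  set (a1 := X + nu + th * tanh (qs * X + qs * nu)).
  set (a2 := X + nu + th * tanh (qs * X)).
  assert (HF : RInt g b1 a1 - RInt g b1 a2 = RInt g a2 a1).
  { rewrite <- (RInt_Chasles g b1 a2 a1) by auto. unfold plus; simpl. ring. }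
  rewrite HF.
  destruct (tanh_diff (qs*X) (qs*nu)) as [Hd1 Hd2]; [nra|].
  set (d := tanh (qs * X + qs * nu) - tanh (qs * X)) in *.
  assert (Ha : a1 - a2 = th * d) by (unfold a1, a2, d; ring).
  assert (Hint : Rabs (RInt g a2 a1) <= th * d * C).
  { rewrite <- Ha. apply abs_RInt_le_const; auto. nra. }
  assert (Hexp := expm1_le (qs*nu) ltac:(nra)).
  assert (HD : exp (2*(qs*nu)) <= exp (2*qs)).
  { destruct (Req_dec (qs*nu) qs). rewrite H; lra. left; apply exp_increasing; nra. }
  assert (Hep : 0 < exp (2*(qs*nu))) by apply exp_pos.
  assert (Hd3 : d <= 4*qs*nu*exp(2*qs) * exp (-2 * Rabs (qs*X))) by
   (assert (0 < exp (-2 * Rabs (qs*X))) by apply exp_pos;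
    assert (exp (2 * (qs * nu)) - 1 <= 2*qs*nu*exp(2*qs)) by (assert (0 <= qs*nu) by nra; nra);
    eapply Rle_trans; [exact Hd2|];
    replace (4 * qs * nu * exp (2 * qs)) with (2*(2*qs*nu*exp(2*qs))) by ring;
    apply Rmult_le_compat_r; lra).
  rewrite Rabs_mult, (Rabs_right qs) in Hd3 by lra.
  assert (Hinv : exp (2 * qs * Rabs X) * exp (-2 * (qs * Rabs X)) = 1).
  { rewrite <- exp_plus. replace (2 * qs * Rabs X + -2 * (qs * Rabs X)) with 0 by ring. apply exp_0. }
  assert (He2 : 0 < exp (2 * qs * Rabs X)) by apply exp_pos.
  assert (Hed : exp (2 * qs * Rabs X) * d <= 4*qs*nu*exp(2*qs)).
  { apply Rle_trans with (exp (2 * qs * Rabs X) * (4*qs*nu*exp(2*qs) * exp (-2 * (qs*Rabs X)))).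
    apply Rmult_le_compat_l; lra. right. transitivity (4*qs*nu*exp(2*qs) * (exp (2 * qs * Rabs X) * exp (-2 * (qs * Rabs X)))); [ring| rewrite Hinv; ring]. }
  assert (Hn3 : 0 < nu^3) by (apply pow_lt; lra).
  apply Rle_trans with (/ nu^3 * exp (2 * qs * Rabs X) * (th * d * C)).
  { apply Rmult_le_compat_l; auto. apply Rmult_le_pos; [left; apply Rinv_0_lt_compat; auto| lra]. }
  apply Rle_trans with (/ nu^3 * (C*nu^2) * C * (exp (2 * qs * Rabs X) * d)).
  { replace (/ nu ^ 3 * exp (2 * qs * Rabs X) * (th * d * C)) with
       (/ nu ^ 3 * th * C * (exp (2 * qs * Rabs X) * d)) by ring.
    apply Rmult_le_compat_r; [nra|]. apply Rmult_le_compat_r; [lra|].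
    apply Rmult_le_compat_l; [left; apply Rinv_0_lt_compat; auto| lra]. }
  apply Rle_trans with (/ nu^3 * (C*nu^2) * C * (4*qs*nu*exp(2*qs))).
  { apply Rmult_le_compat_l; auto.
    apply Rmult_le_pos; [|lra]. apply Rmult_le_pos; [left; apply Rinv_0_lt_compat; auto| nra]. }
  right. field. lra.
Qed.

Lemma Lg_abs g K q (Hq : 0 < q) (Hc : forall s, continuous g s)
  (Hb : forall s, 0 <= s -> Rabs (g s) <= K * exp (- q * s)) : Rabs (Lg g) <= K/q.
Proof.
  assert (HL0 := Lg_bound g K q Hq Hc Hb 0 (Rle_refl 0)).
  rewrite RInt_point in HL0. unfold zero in HL0; simpl in HL0.
  replace (-q*0) with 0 in HL0 by ring. rewrite exp_0, Rmult_1_r in HL0.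
  replace (0 - Lg g) with (- Lg g) in HL0 by ring. rewrite Rabs_Ropp in HL0. exact HL0.
Qed.

Theorem lemmaB3
  (I1 I2 : R -> Prop) (f : R -> R -> R -> R) (theta : R -> R -> R) (qs : R)
  (HI1 : forall nu, I1 nu -> 0 < nu < 1)
  (Heven : forall nu alpha, I1 nu -> I2 alpha -> forall s, f nu alpha (- s) = f nu alpha s)
  (Hcont : forall nu alpha, I1 nu -> I2 alpha -> forall s, continuous (f nu alpha) s)
  (Htheta0 : forall nu alpha, I1 nu -> I2 alpha -> 0 <= theta nu alpha)
  (HC : exists C, 0 < C /\
     (forall nu alpha, I1 nu -> I2 alpha ->
        (forall s, Rabs (f nu alpha s) <= C) /\ theta nu alpha <= C * nu ^ 2))
  (Hqs : 0 < qs) :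
  (* (i) *)
  (exists M, forall nu alpha X, I1 nu -> I2 alpha ->
     / nu ^ 3 * exp (2 * qs * Rabs X) * Rabs (F_B3 (f nu alpha) (theta nu alpha) qs nu X) <= M)
  /\
  (* (ii) *)
  (forall q, 0 < q < qs ->
     (exists K, forall nu alpha X, I1 nu -> I2 alpha ->
        exp (q * Rabs X) * Rabs (f nu alpha X) <= K) ->
     exists L : R -> R -> R, exists M, forall nu alpha, I1 nu -> I2 alpha ->
       forall X, exp (q * Rabs X) *
                   Rabs (RInt (f nu alpha) 0 X - L nu alpha * tanh (qs * X / 2))
                 + Rabs (L nu alpha) <= M).
Proof.
  split.
  - destruct HC as [C [HC0 HC1]]. exists (C*C*(4*qs*exp(2*qs))).
    intros nu alpha X H1 H2. destruct (HC1 nu alpha H1 H2) as [Hb Ht].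
    apply part_i; auto.
  - intros q Hq [K HK]. exists (fun nu alpha => Lg (f nu alpha)), (3*(K/q) + K/q).
    intros nu alpha H1 H2 X.
    set (g := f nu alpha).
    assert (Hc : forall s, continuous g s) by (apply Hcont; auto).
    assert (He : forall s, g (-s) = g s) by (apply Heven; auto).
    assert (Hb : forall s, 0 <= s -> Rabs (g s) <= K * exp (- q * s)).
    { intros s Hs. assert (H := HK nu alpha s H1 H2). rewrite Rabs_right in H by lra.
      fold g in H. assert (Hp := exp_pos (q*s)).
      replace (-q*s) with (-(q*s)) by ring. rewrite exp_Ropp.
      apply (Rmult_le_reg_l (exp (q*s))); auto.
      replace (exp (q * s) * (K * / exp (q * s))) with K by (field; lra). exact H. }
    assert (HLa := Lg_abs g K q (proj1 Hq) Hc Hb).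
    apply Rplus_le_compat; auto.
    destruct (Rle_or_lt 0 X) as [HX|HX].
    + rewrite Rabs_right by lra. apply pos_case; auto; lra.
    + rewrite Rabs_left by lra.
      replace X with (-(-X)) at 2 by ring. rewrite RInt_odd by auto.
      replace (qs * X / 2) with (-(qs * (-X) / 2)) by field. rewrite tanh_opp.
      replace (- RInt g 0 (- X) - Lg g * - tanh (qs * - X / 2)) with
        (- (RInt g 0 (- X) - Lg g * tanh (qs * - X / 2))) by ring.
      rewrite Rabs_Ropp. replace (q * - X) with (q * (-X)) by ring.
      apply pos_case; auto; lra.
Qed.
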